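(* Let $S=\{p_1,\dots,p_n\}$ be a set of $n$ distinct primes and let $f_1,\dots,f_n\in\mathcal{V}$ be nonzero. Then $f_1\otimes\cdots\otimes f_n$ is an eigenfunction of $\mathbf{U}_S$ if and only if each $f_j$ is a simultaneous eigenfunction of all Hecke operators $U_q$, $q\ge2$.
   Context: For a power series $f(x)=\sum_{n\ge0}a_nx^n$ and a positive integer $q$, $U_qf(x)=\sum_{n\ge0}a_{qn}x^n$. For $k\in\mathbb{N}=\{0,1,2,\dots\}$ let $\phi_k(x)=(x\frac{d}{dx})^k\big(\frac{1}{1-x}\big)$, and let $\mathcal{V}$ be the complex span of $\phi_0,\phi_1,\dots$. Let $\mathcal{H}^n=\mathcal{V}\otimes\cdots\otimes\mathcal{V}$ ($n$ factors), where $f_1\otimes\cdots\otimes f_n$ is identified with the function $f_1(x_1)\cdots f_n(x_n)$. The operator $\mathbf{U}_S=U_{p_1}\otimes\cdots\otimes U_{p_n}$ is defined by $\mathbf{U}_S(f_1\otimes\cdots\otimes f_n)(x_1,\dots,x_n)=(U_{p_1}f_1)(x_1)\cdots(U_{p_n}f_n)(x_n)$, extended linearly; $F$ is an eigenfunction of $\mathbf{U}_S$ if $F\neq0$ and $\mathbf{U}_SF=\lambda F$ for some constant $\lambda$. *)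

(* Defs.v *)
From HB Require Import structures.
From mathcomp Require Import all_boot all_order all_algebra.
From mathcomp Require Import complex.
From mathcomp Require Import reals.
Set Implicit Arguments. Unset Strict Implicit. Unset Printing Implicit Defensive.
Import Order.TTheory GRing.Theory Num.Theory.
Local Open Scope ring_scope.

Section Defs.
Variable R : realType.
Local Notation C := (R[i]).

(* A one-variable power series sum_n a_n x^n is represented by its
   coefficient sequence a : nat -> C. *)
Definition series := nat -> C.

(* phi_k = (x d/dx)^k (1/(1-x)) = sum_n n^k x^n *)
Definition phi (k : nat) : series := fun m => (m%:R : C) ^+ k.

Definition inV (a : series) : Prop :=
  exists c : seq C, forall m, a m = \sum_(k < size c) c`_k * phi k m.

Definition Uop (q : nat) (a : series) : series := fun m => a (q * m)%N.

Definition eigen_U (q : nat) (a : series) : Prop :=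
  a <> (fun _ => 0) /\ exists lam : C, forall m, Uop q a m = lam * a m.

(* An n-variable power series is represented by its coefficient array
   indexed by multi-indices ('I_n -> nat). *)
Definition mseries (n : nat) := ('I_n -> nat) -> C.

(* f_1 (x) ... (x) f_n, identified with f_1(x_1)...f_n(x_n) *)
Definition tensor (n : nat) (f : 'I_n -> series) : mseries n :=
  fun m => \prod_(j < n) f j (m j).

Definition US (n : nat) (p : 'I_n -> nat) (F : mseries n) : mseries n :=
  fun m => F (fun j => (p j * m j)%N).

Definition eigen_US (n : nat) (p : 'I_n -> nat) (F : mseries n) : Prop :=
  F <> (fun _ => 0) /\ exists lam : C, forall m, US p F m = lam * F m.

End Defs.

(* Main.v *)
Require Import Defs.
From HB Require Import structures.
From mathcomp Require Import all_boot all_order all_algebra.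
From mathcomp Require Import complex.
From mathcomp Require Import reals.
From Stdlib Require Import Classical FunctionalExtensionality.
From mathcomp Require Import ring.
Import GRing.Theory Num.Theory.
Local Open Scope ring_scope.
Set Implicit Arguments. Unset Strict Implicit.

Section Aux.
Variable R : realType.
Local Notation C := (R[i]).

Lemma V_poly (a : series R) : inV a -> exists P : {poly C}, forall m, a m = P.[m%:R].
Proof.
case=> c Hc; exists (\sum_(k < size c) c`_k *: 'X^k) => m.
rewrite Hc horner_sum; apply: eq_bigr => k _.
by rewrite hornerZ hornerXn.
Qed.

Lemma poly_eq_nat (P Q : {poly C}) :
  (forall m, P.[m%:R] = Q.[m%:R]) -> P = Q.
Proof.
move=> H; apply/eqP; rewrite -subr_eq0; apply/negPn/negP => nz.
have := max_poly_roots nz (rs := [seq (i%:R : C) | i <- iota 0 (size (P - Q))]).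
rewrite size_map size_iota ltnn => H2; suff: false by []; apply: H2.
  by apply/allP => x /mapP [i _ ->]; rewrite /root hornerD hornerN H subrr.
by rewrite map_inj_uniq ?iota_uniq // => i j /eqP; rewrite eqr_nat => /eqP.
Qed.

Lemma nz_exists (P : {poly C}) : P != 0 -> exists m, P.[m%:R] != 0.
Proof.
move=> nz; apply: NNPP => H; move/negP: nz; apply; apply/eqP.
apply: poly_eq_nat => m; rewrite horner0; apply/eqP; apply: NNPP => Hm.
by apply: H; exists m; apply/negP.
Qed.

Definition scalep (q : nat) (P : {poly C}) : {poly C} :=
  \poly_(i < size P) ((q%:R : C) ^+ i * P`_i).

Lemma scalep_horner q P x : (scalep q P).[x] = P.[q%:R * x].
Proof.
rewrite (horner_coef_wide _ (size_poly _ _)) horner_coef.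
apply: eq_bigr => i _; rewrite coef_poly ltn_ord exprMn; ring.
Qed.

Lemma scalep_coef q P i : (scalep q P)`_i = (q%:R : C) ^+ i * P`_i.
Proof.
rewrite coef_poly; case: ltnP => // h.
by rewrite nth_default // mulr0.
Qed.

Lemma scalep_neq0 q P : (0 < q)%N -> P != 0 -> scalep q P != 0.
Proof.
move=> q0 nz; apply/negP => /eqP E.
have := congr1 (fun p : {poly C} => p`_(size P).-1) E.
rewrite scalep_coef coef0 /= => /eqP; rewrite mulf_eq0 expf_eq0 pnatr_eq0.
rewrite -lead_coefE lead_coef_eq0 (negPf nz) orbF.
by rewrite -[q == 0%N]negbK -lt0n q0 andbF.
Qed.

Lemma mono (P : {poly C}) (q : nat) (mu : C) : P != 0 -> (2 <= q)%N ->
  (forall m, P.[(q * m)%N%:R] = mu * P.[m%:R]) ->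
  exists c k, c != 0 /\ forall m, P.[m%:R] = c * (m%:R) ^+ k.
Proof.
move=> nz q2 H.
have E : scalep q P = mu *: P.
  by apply: poly_eq_nat => m; rewrite scalep_horner hornerZ -natrM H.
have Ec i : (q%:R : C) ^+ i * P`_i = mu * P`_i.
  by rewrite -scalep_coef E coefZ.
set k := (size P).-1.
have lnz : P`_k != 0 by rewrite -lead_coefE lead_coef_eq0.
have muE : mu = (q%:R : C) ^+ k.
  by apply: (mulIf lnz); rewrite Ec.
exists P`_k, k; split => // m.
have HP : P = P`_k *: 'X^k; last by rewrite {1}HP hornerZ hornerXn.
apply/polyP => i; rewrite coefZ coefXn.
case: eqVneq => [->|ne]; first by rewrite mulr1.
rewrite mulr0; apply/eqP; apply: contraR ne => nzi.
have := Ec i; rewrite muE => /(mulIf nzi) /eqP.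
by rewrite -!natrX eqr_nat eqn_exp2l.
Qed.


Lemma series_poly n (f : 'I_n -> series R) : (forall j, inV (f j)) ->
  (forall j, f j <> (fun _ => 0)) ->
  exists P : 'I_n -> {poly C}, forall j, P j != 0 /\ forall m, f j m = (P j).[m%:R].
Proof.
move=> hV hnz.
have [P HP] := fin_all_exists (fun j => V_poly (hV j)).
exists P => j; split => //; apply/negP => /eqP E; apply: (hnz j).
by apply: functional_extensionality => m; rewrite HP E horner0.
Qed.



End Aux.

Theorem mainTheorem17 (R : realType) (n : nat) (p : 'I_n -> nat)
  (f : 'I_n -> series R) :
  injective p -> (forall j, prime (p j)) ->
  (forall j, inV (f j)) -> (forall j, f j <> (fun _ => 0)) ->
  (eigen_US p (tensor f) <->
   (forall j, forall q : nat, (2 <= q)%N -> eigen_U q (f j))).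
Proof.
move=> _ pr hV hnz.
have [P HP] := series_poly hV hnz.
have ms0 : forall i, exists m : nat, f i m != 0 /\ f i (p i * m)%N != 0.
  move=> i.
  have [Pnz Pe] := HP i.
  have := scalep_neq0 (prime_gt0 (pr i)) Pnz.
  move=> /(mulf_neq0 Pnz) /nz_exists [m]; rewrite hornerM scalep_horner.
  rewrite mulf_eq0 negb_or => /andP [h1 h2]; exists m.
  by rewrite !Pe natrM h1 h2.
have [ms Hms] := fin_all_exists ms0.
split.
- case=> _ [lam Hlam] j q q2.
  have [Pnz Pe] := HP j.
  pose A := \prod_(i | i != j) f i (p i * ms i)%N.
  pose B := \prod_(i | i != j) f i (ms i).
  have Anz : A != 0 by apply/prodf_neq0 => i _; case: (Hms i).
  have key : forall x, (P j).[(p j * x)%N%:R] = (lam * B / A) * (P j).[x%:R].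
    move=> x; have := Hlam (fun i => if i == j then x else ms i).
    rewrite /US /tensor (bigD1 j) //= (bigD1 j (P := predT)) //= !eqxx.
    rewrite (eq_bigr (fun i => f i (p i * ms i)%N)); last first.
      by move=> i; rewrite ?andTb => /negPf ->.
    rewrite [X in lam * (_ * X)](eq_bigr (fun i => f i (ms i))); last first.
      by move=> i; rewrite ?andTb => /negPf ->.
    rewrite -/A -/B -!Pe => E.
    apply: (mulIf Anz); rewrite E; field.
    exact: Anz.
  have [c [k [cnz Hck]]] := mono Pnz (prime_gt1 (pr j)) key.
  split; first exact: hnz.
  exists ((q%:R : R[i]) ^+ k) => m.
  by rewrite /Uop !Pe !Hck natrM exprMn mulrCA.
- move=> H.
  have lam0 : forall i, exists l : R[i], forall m, f i (p i * m)%N = l * f i m.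
    by move=> i; case: (H i (p i) (prime_gt1 (pr i))) => _ [l Hl]; exists l.
  have [lam Hlam] := fin_all_exists lam0.
  split.
    move=> E; have := congr1 (fun F => F ms) E; rewrite /tensor /= => /eqP.
    by apply/negP; apply/prodf_neq0 => i _; case: (Hms i).
  exists (\prod_(i < n) lam i) => m.
  rewrite /US /tensor -big_split /=; apply: eq_bigr => i _.
  exact: Hlam.
Qed.
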